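(* Let $\alpha\in(0,\infty)\setminus\{1\}$. Consider a finite set of flows $\mathcal K$, each flow $k$ having rate $r_k>0$ and being associated to a beam $v_k\in V$; let $\mathcal K(v)=\{k: v_k=v\}$ and assume $\mathcal K(v)\neq\emptyset$ for every $v\in V$. Consider the problem $$\text{maximize } \sum_{v\in V}\sum_{k\in\mathcal K(v)} f_\alpha(r_k\gamma_v\delta_k)\quad\text{subject to } \gamma\in\mathrm{conv}(\mathcal Z),\ \delta\in\Delta,$$ where $f_\alpha(x)=x^{1-\alpha}/(1-\alpha)$, $\Delta=\{\delta\in[0,1]^{\mathcal K}: \sum_{k\in\mathcal K(v)}\delta_k=1 \ \forall v\in V\}$. Define $\phi_v=\big(\sum_{k\in\mathcal K(v)} r_k^{1/\alpha-1}\big)^{\alpha}$ and define $\theta_v,\kappa^\star_v$ recursively from the leaves upward: for $v$ with children set $C(v)=\{v':(v,v')\in E\}$ let $S_v=\sum_{v'\in C(v)}\theta_{v'}$ ($S_v=0$ for a leaf), $$\kappa^\star_v=\Big[1+\Big(\frac{1-\alpha}{\phi_v}S_v\Big)^{1/\alpha}\Big]^{-1},\qquad \theta_v=(\kappa^\star_v)^{1-\alpha}\frac{\phi_v}{1-\alpha}+(1-\kappa^\star_v)^{1-\alpha}S_v$$ (so that for a leaf $\kappa^\star_v=1$ and $\theta_v=\phi_v/(1-\alpha)$). Then the problem has a unique optimal solution $(\delta^\star,\gamma^\star)$, given by $$\delta^\star_k=\frac{r_k^{1/\alpha-1}}{\sum_{k'\in\mathcal K(v_k)} r_{k'}^{1/\alpha-1}},\qquad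 \gamma^\star_v=\kappa^\star_v\prod_{v'\in\mathcal A(v)}(1-\kappa^\star_{v'}).$$
   Context: $G=(V,E)$ is a finite directed rooted tree with vertex set $V=\{1,\dots,|V|\}$ and root $1$, edges oriented from parent to child. For $v\in V$: $\mathcal A(v)$ is the set of strict ancestors of $v$, $\bar{\mathcal A}(v)=\mathcal A(v)\cup\{v\}$, $\mathcal D(v)$ is the set of strict descendants of $v$, $\bar{\mathcal D}(v)=\mathcal D(v)\cup\{v\}$, and $d(v)$ is the number of children of $v$. $\mathcal Z=\{z\in\{0,1\}^{V}: z_v z_{v'}=0 \text{ for all } v\in V,\ v'\in\mathcal A(v)\}$ (admissible sets of simultaneously active beams) and $\mathrm{conv}(\mathcal Z)$ is its convex hull. $\gamma_v$ is the fraction of time beam $v$ is active and $\delta_k$ the fraction of beam $v_k$'s active time given to flow $k$; flow $k$ obtains throughput $r_k\gamma_{v_k}\delta_k$. *)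

(* Defs.v *)
From Stdlib Require Import Reals Lra List Arith Bool.
Import ListNotations.
Open Scope R_scope.

(* Vertices are 0..n-1 with root 0 (the paper's 1..|V| shifted by one).
   The tree is given by a parent map; flows are 0..nK-1. *)

Definition sumR (l : list nat) (f : nat -> R) : R :=
  fold_right (fun i acc => f i + acc) 0 l.

Definition verts (n : nat) : list nat := seq 0 n.

Definition is_tree (n : nat) (parent : nat -> nat) : Prop :=
  (0 < n)%nat /\
  forall v, (v < n)%nat -> v <> 0%nat ->
    (parent v < n)%nat /\ exists m, Nat.iter m parent v = 0%nat.

Definition children (n : nat) (parent : nat -> nat) (v : nat) : list nat :=
  filter (fun c => andb (negb (Nat.eqb c 0)) (Nat.eqb (parent c) v)) (verts n).

(* Strict ancestors of v: the path v -> parent v -> ... -> root (excluding v).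
   Fuel n suffices for a tree on n vertices. *)
Fixpoint anc_fuel (parent : nat -> nat) (fuel v : nat) : list nat :=
  match fuel with
  | O => []
  | S f => if Nat.eqb v 0 then [] else parent v :: anc_fuel parent f (parent v)
  end.

Definition ancestors (n : nat) (parent : nat -> nat) (v : nat) : list nat :=
  anc_fuel parent n v.

(* Admissible sets Z: 0/1 vectors with z_v z_{v'} = 0 for v' ancestor of v. *)
Definition admissible (n : nat) (parent : nat -> nat) (z : nat -> bool) : Prop :=
  forall v, (v < n)%nat -> forall u, In u (ancestors n parent v) ->
    z v = true -> z u = false.

Definition in_convZ (n : nat) (parent : nat -> nat) (gamma : nat -> R) : Prop :=
  exists l : list (R * (nat -> bool)),
    Forall (fun p => 0 <= fst p /\ admissible n parent (snd p)) l /\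
    fold_right (fun (p : R * (nat -> bool)) (acc : R) => fst p + acc) 0 l = 1 /\
    forall v, (v < n)%nat ->
      gamma v = fold_right (fun (p : R * (nat -> bool)) (acc : R) => fst p * (if snd p v then 1 else 0) + acc) 0 l.

Definition flows_of (nK : nat) (beam : nat -> nat) (v : nat) : list nat :=
  filter (fun k => Nat.eqb (beam k) v) (seq 0 nK).

Definition in_Delta (n nK : nat) (beam : nat -> nat) (delta : nat -> R) : Prop :=
  (forall k, (k < nK)%nat -> 0 <= delta k <= 1) /\
  (forall v, (v < n)%nat -> sumR (flows_of nK beam v) delta = 1).

(* Extended reals for the objective: None = -infinity. *)
Definition eadd (a b : option R) : option R :=
  match a, b with Some x, Some y => Some (x + y) | _, _ => None end.

Definition esum (l : list nat) (f : nat -> option R) : option R :=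
  fold_right (fun i acc => eadd (f i) acc) (Some 0) l.

Definition ele (a b : option R) : Prop :=
  match a, b with
  | None, _ => True
  | Some _, None => False
  | Some x, Some y => x <= y
  end.

(* f_alpha(x) = x^(1-alpha)/(1-alpha) for x >= 0, with its natural value at 0:
   0 if alpha < 1, -infinity if alpha > 1. *)
Definition f_alpha (alpha x : R) : option R :=
  if Rlt_dec 0 x then Some (Rpower x (1 - alpha) / (1 - alpha))
  else if Rlt_dec alpha 1 then Some 0 else None.

Definition objective (n nK : nat) (beam : nat -> nat) (rate : nat -> R) (alpha : R)
  (delta gamma : nat -> R) : option R :=
  esum (verts n) (fun v =>
    esum (flows_of nK beam v) (fun k => f_alpha alpha (rate k * gamma v * delta k))).

Definition feasible n nK parent beam (delta gamma : nat -> R) : Prop :=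
  in_convZ n parent gamma /\ in_Delta n nK beam delta.

Definition optimal n nK parent beam rate alpha (delta gamma : nat -> R) : Prop :=
  feasible n nK parent beam delta gamma /\
  forall delta' gamma', feasible n nK parent beam delta' gamma' ->
    ele (objective n nK beam rate alpha delta' gamma')
        (objective n nK beam rate alpha delta gamma).

Definition phi nK beam (rate : nat -> R) alpha (v : nat) : R :=
  Rpower (sumR (flows_of nK beam v) (fun k => Rpower (rate k) (1/alpha - 1))) alpha.

(* (theta_v, kappa*_v), computed from the leaves upward (fuel = n bounds the
   height of the tree). For a leaf: kappa = 1, theta = phi/(1-alpha). *)
Fixpoint theta_kappa n parent nK beam rate alpha (fuel v : nat) : R * R :=
  let ph := phi nK beam rate alpha v in
  match fuel with
  | O => (ph / (1 - alpha), 1)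
  | S f =>
    match children n parent v with
    | [] => (ph / (1 - alpha), 1)
    | cs =>
      let Sv := sumR cs (fun c => fst (theta_kappa n parent nK beam rate alpha f c)) in
      let kap := / (1 + Rpower ((1 - alpha) / ph * Sv) (1 / alpha)) in
      (Rpower kap (1 - alpha) * ph / (1 - alpha) + Rpower (1 - kap) (1 - alpha) * Sv, kap)
    end
  end.

Definition kappa_star n parent nK beam rate alpha (v : nat) : R :=
  snd (theta_kappa n parent nK beam rate alpha n v).

Definition theta n parent nK beam rate alpha (v : nat) : R :=
  fst (theta_kappa n parent nK beam rate alpha n v).

Definition delta_star nK beam (rate : nat -> R) alpha (k : nat) : R :=
  Rpower (rate k) (1/alpha - 1) /
  sumR (flows_of nK beam (beam k)) (fun k' => Rpower (rate k') (1/alpha - 1)).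

Definition prodR (l : list nat) (f : nat -> R) : R :=
  fold_right (fun i acc => f i * acc) 1 l.

Definition gamma_star n parent nK beam rate alpha (v : nat) : R :=
  kappa_star n parent nK beam rate alpha v *
  prodR (ancestors n parent v) (fun u => 1 - kappa_star n parent nK beam rate alpha u).

(* Main.v *)
Require Import Defs.
From Stdlib Require Import Reals Lra Lia List Arith Bool Classical FinFun Sorting.Mergesort Sorting.Sorted Permutation.
Import ListNotations.
Open Scope R_scope.

Lemma sumR_ext l f g : (forall i, In i l -> f i = g i) -> sumR l f = sumR l g.
Proof. induction l; simpl; intros; auto. rewrite H by auto. f_equal. apply IHl; auto. Qed.

Lemma sumR_plus l f g : sumR l (fun i => f i + g i) = sumR l f + sumR l g.
Proof. induction l; simpl; lra. Qed.

Lemma sumR_minus l f g : sumR l (fun i => f i - g i) = sumR l f - sumR l g.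
Proof. induction l; simpl; lra. Qed.

Lemma sumR_scal l c f : sumR l (fun i => c * f i) = c * sumR l f.
Proof. induction l; simpl; [lra|]. rewrite IHl; ring. Qed.

Lemma sumR_le l f g : (forall i, In i l -> f i <= g i) -> sumR l f <= sumR l g.
Proof. induction l; simpl; intros; [lra|]. pose proof (H a (or_introl eq_refl)).
  pose proof (IHl (fun i Hi => H i (or_intror Hi))). lra. Qed.

Lemma sumR_zero l : sumR l (fun _ => 0) = 0.
Proof. induction l; simpl; lra. Qed.

Lemma sumR_nonneg l f : (forall i, In i l -> 0 <= f i) -> 0 <= sumR l f.
Proof. intros. rewrite <- (sumR_zero l). apply sumR_le; auto. Qed.

Lemma sumR_pos l f : l <> [] -> (forall i, In i l -> 0 < f i) -> 0 < sumR l f.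
Proof. destruct l as [|x l]; [congruence|]. intros _ H. simpl.
  pose proof (H x (or_introl eq_refl)).
  pose proof (sumR_nonneg l f (fun i Hi => Rlt_le _ _ (H i (or_intror Hi)))). lra. Qed.

Lemma sumR_In_le l f x : (forall i, In i l -> 0 <= f i) -> In x l -> f x <= sumR l f.
Proof. induction l; simpl; intros; [contradiction|]. destruct H0.
  - subst. pose proof (sumR_nonneg l f (fun i Hi => H i (or_intror Hi))). lra.
  - pose proof (H a (or_introl eq_refl)). pose proof (IHl (fun i Hi => H i (or_intror Hi)) H0). lra. Qed.

Lemma sumR_filter p l f : sumR (filter p l) f = sumR l (fun i => if p i then f i else 0).
Proof. induction l; simpl; auto. destruct (p a); simpl; rewrite IHl; lra. Qed.

Lemma sumR_swap l1 l2 (F : nat -> nat -> R) :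
  sumR l1 (fun i => sumR l2 (fun j => F i j)) = sumR l2 (fun j => sumR l1 (fun i => F i j)).
Proof. induction l1; simpl.
  - rewrite sumR_zero; auto.
  - rewrite IHl1. rewrite <- sumR_plus. auto. Qed.

Lemma sumR_zero_nonneg l f : (forall i, In i l -> 0 <= f i) -> sumR l f <= 0 ->
  forall i, In i l -> f i = 0.
Proof. intros. pose proof (sumR_In_le l f i H H1). pose proof (H i H1). lra. Qed.

Lemma sumR_single l x f : NoDup l -> In x l -> (forall i, In i l -> i <> x -> f i = 0) ->
  sumR l f = f x.
Proof. induction l; simpl; intros; [contradiction|]. inversion H; subst.
  destruct H0.
  - subst. rewrite (sumR_ext l f (fun _ => 0)). rewrite sumR_zero; lra.
    intros. apply H1; auto. intro; subst; contradiction.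
  - rewrite H1 by (auto; intro; subst; contradiction). rewrite IHl; auto. lra. Qed.

Lemma prodR_ext l f g : (forall i, In i l -> f i = g i) -> prodR l f = prodR l g.
Proof. induction l; simpl; intros; auto. rewrite H by auto. f_equal. apply IHl; auto. Qed.

Lemma prodR_one l : prodR l (fun _ => 1) = 1.
Proof. induction l; simpl; auto. rewrite IHl; lra. Qed.

Lemma prodR_01 l f : (forall i, In i l -> 0 <= f i <= 1) -> 0 <= prodR l f <= 1.
Proof. induction l; simpl; intros; [lra|]. pose proof (H a (or_introl eq_refl)).
  pose proof (IHl (fun i Hi => H i (or_intror Hi))). split; nra. Qed.

Lemma verts_In v n : In v (verts n) <-> (v < n)%nat.
Proof. unfold verts. rewrite in_seq. lia. Qed.

Lemma flows_In nK beam v k : In k (flows_of nK beam v) <-> (k < nK)%nat /\ beam k = v.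
Proof. unfold flows_of. rewrite filter_In, in_seq, Nat.eqb_eq. lia. Qed.

Lemma children_In n parent v c : In c (children n parent v) <-> (c < n)%nat /\ c <> 0%nat /\ parent c = v.
Proof. unfold children. rewrite filter_In, verts_In, andb_true_iff, negb_true_iff, Nat.eqb_eq, Nat.eqb_neq. tauto. Qed.

Section Tree.
Variable n : nat.
Variable parent : nat -> nat.
Hypothesis Htree : is_tree n parent.

Definition isDepth v d := Nat.iter d parent v = 0%nat /\ forall k, (k < d)%nat -> Nat.iter k parent v <> 0%nat.

Lemma min_exists v : forall m, (exists k, (k <= m)%nat /\ Nat.iter k parent v = 0%nat) -> exists d, isDepth v d.
Proof.
  induction m; intros [k [Hk Hz]].
  - exists 0%nat. assert (k = 0%nat) by lia. subst. split; auto. intros; lia.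
  - destruct (classic (exists k, (k <= m)%nat /\ Nat.iter k parent v = 0%nat)) as [H|H].
    + apply IHm; auto.
    + exists (S m). assert (k = S m).
      { destruct (Nat.eq_dec k (S m)); auto. exfalso; apply H; exists k; split; auto; lia. }
      subst. split; auto. intros j Hj Hj0. apply H. exists j; split; auto; lia.
Qed.

Lemma depth_exists v : (v < n)%nat -> exists d, isDepth v d.
Proof.
  intros Hv. destruct (Nat.eq_dec v 0) as [->|Hne].
  - exists 0%nat. split; auto. intros; lia.
  - destruct Htree as [_ Ht]. destruct (Ht v Hv Hne) as [_ [m Hm]].
    apply (min_exists v m). exists m; split; auto.
Qed.

Lemma depth_unique v d1 d2 : isDepth v d1 -> isDepth v d2 -> d1 = d2.
Proof.
  intros [H1 H1'] [H2 H2']. destruct (Nat.lt_trichotomy d1 d2) as [h|[h|h]]; auto.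
  - exfalso; apply (H2' d1 h H1).
  - exfalso; apply (H1' d2 h H2).
Qed.

Lemma depth_bound v d : (v < n)%nat -> isDepth v d -> (d <= n - 1)%nat.
Proof.
  intros Hv [Hd Hd'].
  assert (Hlt : forall k, (k < d)%nat -> (Nat.iter k parent v < n)%nat).
  { induction k; intros Hk; simpl; auto.
    destruct Htree as [_ Ht]. apply Ht. apply IHk; lia. apply Hd'; lia. }
  assert (HND : NoDup (map (fun k => Nat.iter k parent v) (seq 0 d))).
  { apply FinFun.Injective_map_NoDup_in; [|apply seq_NoDup].
    intros i j Hi Hj Heq. rewrite in_seq in Hi, Hj.
    assert (Hgen : forall i j, (i < j < d)%nat -> Nat.iter i parent v = Nat.iter j parent v -> False).
    { intros i' j' Hij He.
      apply (Hd' (d - j' + i')%nat); [lia|].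
      rewrite Nat.iter_add, He, <- Nat.iter_add.
      replace (d - j' + j')%nat with d by lia. auto. }
    destruct (Nat.lt_trichotomy i j) as [h|[h|h]]; auto.
    - exfalso; apply (Hgen i j); auto; lia.
    - exfalso; apply (Hgen j i); auto; lia. }
  pose proof (NoDup_incl_length HND (l' := seq 1 (n-1))).
  rewrite length_map, !length_seq in H. apply H.
  intros x Hx. rewrite in_map_iff in Hx. destruct Hx as [k [<- Hk]]. rewrite in_seq in Hk.
  rewrite in_seq. pose proof (Hlt k ltac:(lia)). pose proof (Hd' k ltac:(lia)). lia.
Qed.

Lemma depth_parent c d : (c < n)%nat -> c <> 0%nat -> isDepth c d ->
  (1 <= d)%nat /\ isDepth (parent c) (d - 1).
Proof.
  intros Hc Hc0 [Hd Hd']. destruct d as [|d].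
  - simpl in Hd. congruence.
  - split; [lia|]. replace (S d - 1)%nat with d by lia. split.
    + rewrite <- Nat.iter_succ_r. auto.
    + intros k Hk. rewrite <- Nat.iter_succ_r. apply Hd'. lia.
Qed.

Lemma child_depth v c d : (v < n)%nat -> isDepth v d -> In c (children n parent v) -> isDepth c (S d).
Proof.
  intros Hv Hd Hc. apply children_In in Hc. destruct Hc as [Hcn [Hc0 Hpc]].
  destruct (depth_exists c Hcn) as [d' Hd'].
  destruct (depth_parent c d' Hcn Hc0 Hd') as [H1 H2]. rewrite Hpc in H2.
  pose proof (depth_unique _ _ _ Hd H2). subst. replace (S (d' - 1)) with d' by lia. auto.
Qed.

Lemma anc_stable : forall m v f, Nat.iter m parent v = 0%nat -> (m <= f)%nat ->
  anc_fuel parent f v = anc_fuel parent (S f) v.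
Proof.
  induction m; intros v f Hm Hf.
  - simpl in Hm. subst. destruct f; reflexivity.
  - destruct f; [lia|]. simpl. destruct (Nat.eqb v 0); auto. f_equal.
    apply IHm; [rewrite <- Nat.iter_succ_r; auto| lia].
Qed.

Lemma n_pos : (0 < n)%nat.
Proof. destruct Htree; auto. Qed.

Lemma anc_cons c : (c < n)%nat -> c <> 0%nat ->
  ancestors n parent c = parent c :: ancestors n parent (parent c).
Proof.
  intros Hc Hc0. destruct (depth_exists c Hc) as [d Hd].
  pose proof (depth_bound c d Hc Hd). destruct (depth_parent c d Hc Hc0 Hd) as [H1 [H2 _]].
  unfold ancestors. pose proof n_pos. destruct n as [|n']; [lia|]. simpl.
  apply Nat.eqb_neq in Hc0. rewrite Hc0. f_equal. apply (anc_stable (d - 1)); auto. lia.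
Qed.

Lemma anc_root : ancestors n parent 0 = [].
Proof. unfold ancestors. pose proof n_pos. destruct n; [lia|]. reflexivity. Qed.

Lemma parent_lt c : (c < n)%nat -> c <> 0%nat -> (parent c < n)%nat.
Proof. destruct Htree as [_ Ht]. intros. apply Ht; auto. Qed.

Lemma parent_child c : (c < n)%nat -> c <> 0%nat -> In c (children n parent (parent c)).
Proof. intros. apply children_In. auto. Qed.

Lemma telescope (g : nat -> R) :
  sumR (verts n) (fun v => sumR (children n parent v) g) = sumR (verts n) g - g 0%nat.
Proof.
  unfold children at 1.
  transitivity (sumR (verts n) (fun v => sumR (verts n) (fun c =>
     if (negb (Nat.eqb c 0) && Nat.eqb (parent c) v)%bool then g c else 0))).
  { apply sumR_ext. intros. apply sumR_filter. }
  rewrite sumR_swap.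
  transitivity (sumR (verts n) (fun c => if Nat.eqb c 0 then 0 else g c)).
  { apply sumR_ext. intros c Hc. apply verts_In in Hc.
    destruct (Nat.eqb c 0) eqn:E; simpl.
    - apply sumR_zero.
    - apply Nat.eqb_neq in E. rewrite (sumR_single _ (parent c)).
      + rewrite Nat.eqb_refl; auto.
      + apply seq_NoDup.
      + apply verts_In. apply parent_lt; auto.
      + intros i _ Hi. destruct (Nat.eqb_spec (parent c) i); [congruence|auto]. }
  pose proof n_pos. unfold verts. destruct n as [|n']; [lia|].
  rewrite <- cons_seq. simpl. rewrite <- seq_shift.
  rewrite (sumR_ext _ (fun c => if Nat.eqb c 0 then 0 else g c) g). lra.
  intros i Hi. rewrite in_map_iff in Hi. destruct Hi as [x [<- _]]. reflexivity.
Qed.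

End Tree.

Lemma Rpower_pos x y : 0 < Rpower x y.
Proof. unfold Rpower. apply exp_pos. Qed.

Lemma Rpower_split x e : 0 < x -> Rpower x e = x * Rpower x (e - 1).
Proof. intros. replace e with (1 + (e - 1)) at 1 by ring. rewrite Rpower_plus, Rpower_1; auto. Qed.

Definition Fk (alpha ph S : R) : R * R :=
  let kap := / (1 + Rpower ((1 - alpha) / ph * S) (1 / alpha)) in
  (Rpower kap (1 - alpha) * ph / (1 - alpha) + Rpower (1 - kap) (1 - alpha) * S, kap).

Lemma Fk_props alpha ph S : 0 < alpha -> alpha <> 1 -> 0 < ph -> 0 < (1 - alpha) * S ->
  0 < snd (Fk alpha ph S) < 1 /\
  (1 - alpha) * fst (Fk alpha ph S) = ph * Rpower (snd (Fk alpha ph S)) (1 - alpha - 1) /\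
  ph * Rpower (snd (Fk alpha ph S)) (1 - alpha - 1) =
    (1 - alpha) * S * Rpower (1 - snd (Fk alpha ph S)) (1 - alpha - 1).
Proof.
  intros Ha Ha1 Hph HS. unfold Fk; simpl.
  set (a := 1 - alpha) in *. assert (Ha0 : a <> 0) by (unfold a; lra).
  set (X := a / ph * S). assert (HX : 0 < X) by (unfold X; unfold Rdiv; rewrite Rmult_assoc, (Rmult_comm (/ph)), <- Rmult_assoc; apply Rmult_lt_0_compat; auto; apply Rinv_0_lt_compat; auto).
  set (Y := Rpower X (1 / alpha)). assert (HY : 0 < Y) by apply Rpower_pos.
  set (k := / (1 + Y)).
  assert (Hk : 0 < k < 1).
  { unfold k. split. apply Rinv_0_lt_compat; lra.
    rewrite <- Rinv_1. apply Rinv_lt_contravar; lra. }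
  assert (H1k : 1 - k = Y * k) by (unfold k; field; lra).
  assert (Hmain : ph * Rpower k (a - 1) = a * S * Rpower (1 - k) (a - 1)).
  { rewrite H1k, <- Rpower_mult_distr by lra.
    unfold Y. rewrite Rpower_mult.
    replace (1 / alpha * (a - 1)) with (- (1)) by (unfold a; field; lra).
    rewrite Rpower_Ropp, Rpower_1 by auto. unfold X. field. idtac.
    repeat split; try lra. intro h. rewrite h in HS. lra. }
  split; [auto|]. split; [|auto].
  rewrite (Rpower_split k a), (Rpower_split (1 - k) a) by lra.
  replace (a * (k * Rpower k (a - 1) * ph / a + (1 - k) * Rpower (1 - k) (a - 1) * S))
    with (k * (ph * Rpower k (a - 1)) + (1 - k) * (a * S * Rpower (1 - k) (a - 1))) by (field; auto).
  rewrite <- Hmain. ring.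
Qed.

Section Kappa.
Variable n nK : nat.
Variable parent beam : nat -> nat.
Variable rate : nat -> R.
Variable alpha : R.
Hypothesis Htree : is_tree n parent.
Hypothesis Halpha : 0 < alpha.
Hypothesis Halpha1 : alpha <> 1.

Local Notation ph := (phi nK beam rate alpha).
Local Notation tk := (theta_kappa n parent nK beam rate alpha).

Lemma ph_pos v : 0 < ph v.
Proof. apply Rpower_pos. Qed.

Lemma tk_S f v : tk (S f) v =
  match children n parent v with
  | [] => (ph v / (1 - alpha), 1)
  | cs => Fk alpha (ph v) (sumR cs (fun c => fst (tk f c)))
  end.
Proof. reflexivity. Qed.

Lemma tk_stable : forall f v d, (v < n)%nat -> isDepth parent v d -> (n - 1 <= d + f)%nat ->
  tk f v = tk (S f) v.
Proof.
  induction f; intros v d Hv Hd Hf.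
  - rewrite tk_S. destruct (children n parent v) eqn:E; [reflexivity|].
    exfalso. assert (Hc : In n0 (children n parent v)) by (rewrite E; left; auto).
    pose proof (child_depth n parent Htree v n0 d Hv Hd Hc).
    apply children_In in Hc. pose proof (depth_bound n parent Htree n0 (S d) (proj1 Hc) H). lia.
  - rewrite (tk_S (S f)), (tk_S f).
    destruct (children n parent v) eqn:E; [reflexivity|].
    f_equal. apply sumR_ext. intros c Hc. rewrite <- E in Hc.
    pose proof (child_depth n parent Htree v c d Hv Hd Hc).
    apply children_In in Hc. rewrite (IHf c (S d)); auto; [tauto|lia].
Qed.

Lemma tk_unfold v : (v < n)%nat -> tk n v =
  match children n parent v with
  | [] => (ph v / (1 - alpha), 1)
  | cs => Fk alpha (ph v) (sumR cs (fun c => theta n parent nK beam rate alpha c))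
  end.
Proof.
  intros Hv. pose proof (n_pos n parent Htree). set (m := (n - 1)%nat).
  assert (Hm : n = S m) by (unfold m; lia).
  transitivity (tk (S m) v). { rewrite <- Hm. reflexivity. }
  rewrite tk_S. destruct (children n parent v) eqn:E; [reflexivity|].
  f_equal. apply sumR_ext. intros c Hc. rewrite <- E in Hc. apply children_In in Hc.
  destruct (depth_exists n parent Htree c (proj1 Hc)) as [d Hd].
  unfold theta. rewrite (tk_stable m c d); try tauto; try lia.
  rewrite <- Hm. reflexivity.
Qed.

Lemma tk_pos : forall f v, (v < n)%nat ->
  0 < (1 - alpha) * fst (tk f v) /\ 0 < snd (tk f v) <= 1.
Proof.
  induction f; intros v Hv.
  - simpl. pose proof (ph_pos v). unfold ph in H. split; [|lra].
    replace ((1 - alpha) * (phi nK beam rate alpha v / (1 - alpha))) with (phi nK beam rate alpha v)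
      by (field; lra). auto.
  - rewrite tk_S. pose proof (ph_pos v).
    destruct (children n parent v) eqn:E.
    + simpl. split; [|lra]. replace ((1 - alpha) * (ph v / (1 - alpha))) with (ph v) by (field; lra). auto.
    + assert (HS : 0 < (1 - alpha) * sumR (n0 :: l) (fun c => fst (tk f c))).
      { rewrite <- sumR_scal. apply sumR_pos; [congruence|]. intros c Hc.
        rewrite <- E in Hc. apply children_In in Hc. apply IHf. tauto. }
      destruct (Fk_props alpha (ph v) _ Halpha Halpha1 H HS) as [H1 [H2 _]].
      split; [|lra]. rewrite H2. apply Rmult_lt_0_compat; auto. apply Rpower_pos.
Qed.

End Kappa.

Lemma Rpower_1_base e : Rpower 1 e = 1.
Proof. unfold Rpower. rewrite ln_1, Rmult_0_r, exp_0. auto. Qed.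

Section Flow.
Variable n nK : nat.
Variable parent beam : nat -> nat.
Variable rate : nat -> R.
Variable alpha : R.
Hypothesis Htree : is_tree n parent.
Hypothesis Halpha : 0 < alpha.
Hypothesis Halpha1 : alpha <> 1.

Local Notation ph := (phi nK beam rate alpha).
Local Notation tk := (theta_kappa n parent nK beam rate alpha).
Local Notation kap := (kappa_star n parent nK beam rate alpha).
Local Notation th := (theta n parent nK beam rate alpha).
Local Notation ch := (children n parent).
Local Notation gs := (gamma_star n parent nK beam rate alpha).
Definition PP v := prodR (ancestors n parent v) (fun u => 1 - kap u).
Definition cc v := ph v * Rpower (gs v) (1 - alpha - 1).

Lemma kap_range v : (v < n)%nat -> 0 < kap v <= 1 /\ 0 < (1 - alpha) * th v.
Proof. intros. destruct (tk_pos n nK parent beam rate alpha Halpha Halpha1 n v H). unfold kappa_star, theta. tauto. Qed.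

Lemma kap_th v : (v < n)%nat -> (1 - alpha) * th v = ph v * Rpower (kap v) (1 - alpha - 1).
Proof.
  intros Hv. unfold theta, kappa_star. rewrite (tk_unfold n nK parent beam rate alpha Htree v Hv).
  destruct (ch v) eqn:E.
  - simpl. rewrite Rpower_1_base. field. lra.
  - rewrite <- E. apply Fk_props; auto. apply ph_pos.
    rewrite <- sumR_scal. apply sumR_pos; [congruence|]. intros c Hc. try rewrite <- E in Hc.
    apply children_In in Hc. apply kap_range; tauto.
Qed.

Lemma kap_int v : (v < n)%nat -> ch v <> [] -> kap v < 1 /\
  ph v * Rpower (kap v) (1 - alpha - 1) = (1 - alpha) * sumR (ch v) th * Rpower (1 - kap v) (1 - alpha - 1).
Proof.
  intros Hv Hne. unfold kappa_star. rewrite (tk_unfold n nK parent beam rate alpha Htree v Hv).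
  assert (HS : 0 < (1 - alpha) * sumR (ch v) th).
  { rewrite <- sumR_scal. apply sumR_pos; auto. intros c Hc.
    apply children_In in Hc. apply kap_range; tauto. }
  destruct (ch v) eqn:E; [congruence|].
  destruct (Fk_props alpha (ph v) (sumR (n0 :: l) (fun c => th c)) Halpha Halpha1 (ph_pos nK beam rate alpha v) HS) as [H1 [_ H3]].
  cbv beta iota. split; [lra|]. exact H3.
Qed.

Lemma kap_leaf v : (v < n)%nat -> ch v = [] -> kap v = 1.
Proof. intros Hv E. unfold kappa_star. rewrite (tk_unfold n nK parent beam rate alpha Htree v Hv), E. reflexivity. Qed.

Lemma P_pos_gen : forall f v, (v < n)%nat -> 0 < prodR (anc_fuel parent f v) (fun u => 1 - kap u) <= 1.
Proof.
  induction f; intros v Hv; simpl; [lra|].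
  destruct (Nat.eqb_spec v 0); simpl; [lra|].
  pose proof (parent_lt n parent Htree v Hv n0).
  assert (ch (parent v) <> []).
  { intro E. pose proof (parent_child n parent v Hv n0). rewrite E in H0. auto. }
  destruct (kap_int (parent v) H H0). pose proof (kap_range (parent v) H).
  destruct (IHf (parent v) H). split; nra.
Qed.

Lemma P_pos v : (v < n)%nat -> 0 < PP v <= 1.
Proof. apply P_pos_gen. Qed.

Lemma P_child c : (c < n)%nat -> c <> 0%nat -> PP c = (1 - kap (parent c)) * PP (parent c).
Proof. intros. unfold PP. rewrite (anc_cons n parent Htree c); auto. Qed.

Lemma P_root : PP 0 = 1.
Proof. unfold PP. rewrite (anc_root n parent Htree). reflexivity. Qed.

Lemma gs_eq v : gs v = kap v * PP v.
Proof. reflexivity. Qed.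

Lemma gs_pos v : (v < n)%nat -> 0 < gs v.
Proof. intros. rewrite gs_eq. pose proof (P_pos v H). pose proof (kap_range v H). nra. Qed.

Lemma cc_pos v : 0 < cc v.
Proof. unfold cc. apply Rmult_lt_0_compat. apply ph_pos. apply Rpower_pos. Qed.

Lemma cc_eq v : (v < n)%nat -> cc v = (1 - alpha) * th v * Rpower (PP v) (1 - alpha - 1).
Proof.
  intros Hv. unfold cc. rewrite gs_eq. pose proof (P_pos v Hv). pose proof (kap_range v Hv).
  rewrite <- Rpower_mult_distr by lra. rewrite kap_th by auto. ring.
Qed.

Lemma flow v : (v < n)%nat -> (1 - kap v) * cc v = (1 - kap v) * sumR (ch v) cc.
Proof.
  intros Hv. destruct (ch v) eqn:E.
  - rewrite kap_leaf by auto. ring.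
  - rewrite <- E. f_equal.
    assert (Hne : ch v <> []) by congruence.
    destruct (kap_int v Hv Hne) as [Hk Hint].
    pose proof (P_pos v Hv).
    rewrite (sumR_ext _ _ (fun w => (1 - alpha) * th w * (Rpower (1 - kap v) (1 - alpha - 1) * Rpower (PP v) (1 - alpha - 1)))).
    + rewrite sumR_scal with (f := fun w => (1 - alpha) * th w) (c := _) || idtac.
      transitivity (sumR (ch v) (fun w => (Rpower (1 - kap v) (1 - alpha - 1) * Rpower (PP v) (1 - alpha - 1)) * ((1 - alpha) * th w))).
      2: { apply sumR_ext; intros; ring. }
      rewrite sumR_scal, sumR_scal.
      unfold cc. rewrite gs_eq. pose proof (kap_range v Hv).
      rewrite <- Rpower_mult_distr by lra. rewrite <- Rmult_assoc, Hint. ring.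
    + intros w Hw. apply children_In in Hw. destruct Hw as [Hw1 [Hw2 Hw3]].
      rewrite cc_eq by auto. rewrite P_child by auto. rewrite Hw3.
      rewrite <- Rpower_mult_distr by lra. ring.
Qed.

Lemma S1 : sumR (verts n) (fun v => cc v * gs v) = cc 0%nat.
Proof.
  rewrite (sumR_ext _ _ (fun v => cc v * PP v - sumR (ch v) (fun w => cc w * PP w))).
  - rewrite sumR_minus, telescope by auto. rewrite P_root. ring.
  - intros v Hv. apply verts_In in Hv.
    rewrite (sumR_ext _ _ (fun w => ((1 - kap v) * PP v) * cc w)).
    + rewrite sumR_scal. rewrite Rmult_comm with (r1 := 1 - kap v), Rmult_assoc, <- flow by auto.
      rewrite gs_eq. ring.
    + intros w Hw. apply children_In in Hw. destruct Hw as [Hw1 [Hw2 Hw3]].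
      rewrite P_child by auto. rewrite Hw3. ring.
Qed.

Definition qq (z : nat -> bool) v := prodR (ancestors n parent v) (fun u => if z u then 0 else 1).

Lemma S2 z : admissible n parent z -> sumR (verts n) (fun v => if z v then cc v else 0) <= cc 0%nat.
Proof.
  intros Hz.
  assert (Hq01 : forall v, 0 <= qq z v <= 1).
  { intros. apply prodR_01. intros; destruct (z i); lra. }
  assert (Hq0 : qq z 0 = 1) by (unfold qq; rewrite (anc_root n parent Htree); reflexivity).
  apply Rle_trans with (sumR (verts n) (fun v => qq z v * cc v - sumR (ch v) (fun w => qq z w * cc w))).
  - apply sumR_le. intros v Hv. apply verts_In in Hv.
    rewrite (sumR_ext _ _ (fun w => ((if z v then 0 else 1) * qq z v) * cc w)).
    2:{ intros w Hw. apply children_In in Hw. destruct Hw as [Hw1 [Hw2 Hw3]].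
        unfold qq at 1. rewrite (anc_cons n parent Htree w) by auto. rewrite Hw3. reflexivity. }
    rewrite sumR_scal. destruct (z v) eqn:Ez.
    + assert (qq z v = 1).
      { unfold qq. transitivity (prodR (ancestors n parent v) (fun _ => 1)); [|apply prodR_one]. apply prodR_ext.
        intros u Hu. rewrite (Hz v Hv u Hu Ez). auto. }
      rewrite H. lra.
    + pose proof (cc_pos v). pose proof (Hq01 v). destruct (ch v) eqn:E.
      * simpl. nra.
      * assert (Hne : ch v <> []) by congruence. rewrite <- E.
        pose proof (flow v Hv) as Hfl. destruct (kap_int v Hv Hne) as [Hk1 _].
        assert (Hcc : cc v = sumR (ch v) cc).
        { apply Rmult_eq_reg_l with (1 - kap v); auto. lra. }
        rewrite <- Hcc. lra.
  - rewrite sumR_minus, telescope by auto. rewrite Hq0. lra.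
Qed.

Lemma S3 gamma : in_convZ n parent gamma -> sumR (verts n) (fun v => cc v * gamma v) <= cc 0%nat.
Proof.
  intros [l [Hf [Hw Hg]]].
  rewrite (sumR_ext _ _ (fun v => cc v * fold_right (fun (p : R * (nat -> bool)) (acc : R) => fst p * (if snd p v then 1 else 0) + acc) 0 l)).
  2:{ intros v Hv. apply verts_In in Hv. rewrite Hg; auto. }
  assert (forall l, Forall (fun p => 0 <= fst p /\ admissible n parent (snd p)) l ->
    sumR (verts n) (fun v => cc v * fold_right (fun (p : R * (nat -> bool)) (acc : R) => fst p * (if snd p v then 1 else 0) + acc) 0 l)
    <= cc 0%nat * fold_right (fun (p : R * (nat -> bool)) (acc : R) => fst p + acc) 0 l).
  { clear Hf Hw Hg. intros l0. induction l0 as [|a l0 IHl0]; intros HF; simpl.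
    - rewrite (sumR_ext _ _ (fun _ => 0)) by (intros; ring). rewrite sumR_zero. lra.
    - inversion HF; subst. destruct H1 as [Ha Had].
      rewrite (sumR_ext _ _ (fun v => fst a * (if snd a v then cc v else 0) +
          cc v * fold_right (fun (p : R * (nat -> bool)) (acc : R) => fst p * (if snd p v then 1 else 0) + acc) 0 l0)).
      2:{ intros; destruct (snd a i); ring. }
      rewrite sumR_plus, sumR_scal. pose proof (S2 _ Had). pose proof (IHl0 H2). nra. }
  pose proof (H l Hf). rewrite Hw in H0. lra.
Qed.

End Flow.

Module ROrd <: Orders.TotalLeBool'.
Definition t := R.
Definition leb (x y : R) := if Rle_dec x y then true else false.
Lemma leb_total : forall x y, leb x y = true \/ leb y x = true.
Proof. intros; unfold leb; destruct (Rle_dec x y); destruct (Rle_dec y x); auto; lra. Qed.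
End ROrd.
Module RS := Sort ROrd.

Lemma sorted_conv l : Sorted (fun x y => is_true (if Rle_dec x y then true else false)) l -> Sorted Rle l.
Proof.
  induction 1; constructor; auto. destruct H0; constructor.
  destruct (Rle_dec a b); auto. discriminate.
Qed.

Lemma sorted_head x l : Sorted Rle (x :: l) -> forall z, In z l -> x <= z.
Proof.
  intros H. apply Sorted_extends in H; [|intros a b c; apply Rle_trans].
  rewrite Forall_forall in H. auto.
Qed.

Fixpoint psum (s : list R) (F : R -> R -> R) : R :=
  match s with
  | x :: t => match t with y :: _ => F x y + psum t F | [] => 0 end
  | [] => 0
  end.

Fixpoint mk (A : R -> nat -> bool) (s : list R) : list (R * (nat -> bool)) :=
  match s with
  | x :: t => match t with y :: _ => (y - x, A x) :: mk A t | [] => [] end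
  | [] => []
  end.

Lemma mk_w A s : fold_right (fun (p : R * (nat -> bool)) (acc : R) => fst p + acc) 0 (mk A s) = psum s (fun x y => y - x).
Proof. induction s as [|x t IH]; simpl; auto. destruct t; simpl in *; auto. rewrite IH. auto. Qed.

Lemma mk_g A s v : fold_right (fun (p : R * (nat -> bool)) (acc : R) => fst p * (if snd p v then 1 else 0) + acc) 0 (mk A s)
  = psum s (fun x y => (y - x) * (if A x v then 1 else 0)).
Proof. induction s as [|x t IH]; simpl; auto. destruct t; simpl in *; auto. rewrite IH. auto. Qed.

Lemma mk_Forall (A : R -> nat -> bool) (Q : (nat -> bool) -> Prop) s : Sorted Rle s -> (forall x, Q (A x)) ->
  Forall (fun p => 0 <= fst p /\ Q (snd p)) (mk A s).
Proof.
  induction s as [|x t IH]; intros Hs HQ; simpl; auto. destruct t as [|y t']; auto.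
  constructor.
  - simpl. split; auto. pose proof (sorted_head x (y :: t') Hs y (or_introl eq_refl)). lra.
  - apply IH; auto. inversion Hs; auto.
Qed.

Lemma psum_ext s F G : Sorted Rle s -> (forall x y, In x s -> In y s -> x <= y -> F x y = G x y) -> psum s F = psum s G.
Proof.
  induction s as [|x t IH]; intros Hs H; simpl; auto. destruct t as [|y t']; auto.
  pose proof (sorted_head x (y :: t') Hs y (or_introl eq_refl)).
  rewrite H; simpl; auto. f_equal. apply IH. inversion Hs; auto.
  intros; apply H; simpl in *; tauto.
Qed.

Definition Ind (lo hi x : R) : R := if Rle_dec lo x then if Rlt_dec x hi then 1 else 0 else 0.

Lemma psum_zero_I s lo hi : hi <= lo -> psum s (fun x y => (y - x) * Ind lo hi x) = 0.
Proof.
  intros HRL. induction s as [|x t IH]; simpl; auto. destruct t as [|y t']; auto.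
  rewrite IH. unfold Ind. destruct (Rle_dec lo x); destruct (Rlt_dec x hi); try lra.
Qed.

Lemma psum_I s : Sorted Rle s -> forall lo hi, In lo s -> In hi s -> lo <= hi ->
  psum s (fun x y => (y - x) * Ind lo hi x) = hi - lo.
Proof.
  induction s as [|x t IH]; intros Hs lo hi HL HR HLR; [destruct HL|].
  destruct t as [|y t'].
  - simpl in HL, HR. destruct HL; [|contradiction]. destruct HR; [|contradiction]. subst. simpl. ring.
  - assert (Hst : Sorted Rle (y :: t')) by (inversion Hs; auto).
    pose proof (sorted_head x (y :: t') Hs) as Hh.
    pose proof (Hh y (or_introl eq_refl)) as Hxy.
    assert (Hy : forall z, In z (y :: t') -> y <= z).
    { intros z [<-|Hz]; [lra|]. apply (sorted_head y t' Hst z Hz). }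
    change (psum (x :: y :: t') (fun x y => (y - x) * Ind lo hi x)) with
      ((y - x) * Ind lo hi x + psum (y :: t') (fun x y => (y - x) * Ind lo hi x)).
    destruct (Rlt_dec x lo) as [HxL|HxL].
    + assert (HL' : In lo (y :: t')) by (destruct HL; [lra|auto]).
      assert (HR' : In hi (y :: t')) by (destruct HR; [lra|auto]).
      rewrite IH; auto. unfold Ind. destruct (Rle_dec lo x); [lra|]. ring.
    + assert (HLx : lo = x).
      { destruct HL as [HL|HL]; auto. pose proof (Hh lo HL). lra. }
      subst lo. destruct (Req_dec hi x) as [HRx|HRx].
      * subst hi. rewrite psum_zero_I by lra. unfold Ind. destruct (Rle_dec x x); destruct (Rlt_dec x x); lra.
      * assert (HR' : In hi (y :: t')) by (destruct HR; [congruence|auto]).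
        rewrite (psum_ext (y :: t') _ (fun a b => (b - a) * Ind y hi a)); auto.
        -- assert (Hyh : y <= hi) by (apply Hy; auto).
           rewrite IH by (auto; left; reflexivity). unfold Ind. destruct (Rle_dec x x); [|lra].
           destruct (Rlt_dec x hi); [ring|lra].
        -- intros a b Ha Hb Hab. pose proof (Hy a Ha). unfold Ind.
           destruct (Rle_dec x a); destruct (Rle_dec y a); try lra.
Qed.

Section Conv.
Variable n nK : nat.
Variable parent beam : nat -> nat.
Variable rate : nat -> R.
Variable alpha : R.
Hypothesis Htree : is_tree n parent.
Hypothesis Halpha : 0 < alpha.
Hypothesis Halpha1 : alpha <> 1.

Local Notation kap := (kappa_star n parent nK beam rate alpha).
Local Notation gs := (gamma_star n parent nK beam rate alpha).
Local Notation P := (PP n nK parent beam rate alpha).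

Definition Lv v := 1 - P v.
Definition Rv v := 1 - P v + kap v * P v.

Lemma AC : forall f v u, (v < n)%nat -> In u (anc_fuel parent f v) -> Rv u <= Lv v.
Proof.
  induction f; intros v u Hv Hu; simpl in Hu; [contradiction|].
  destruct (Nat.eqb_spec v 0); [contradiction|].
  pose proof (parent_lt n parent Htree v Hv n0) as Hpv.
  pose proof (P_child n nK parent beam rate alpha Htree v Hv n0) as HPc.
  unfold Lv, Rv. rewrite HPc. destruct Hu as [<-|Hu].
  - lra.
  - pose proof (IHf _ u Hpv Hu). unfold Lv, Rv in H.
    pose proof (P_pos n nK parent beam rate alpha Htree Halpha Halpha1 _ Hpv).
    pose proof (kap_range n nK parent beam rate alpha Halpha Halpha1 _ Hpv). nra.
Qed.

Definition Aset (x : R) (v : nat) : bool :=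
  if Rle_dec (Lv v) x then if Rlt_dec x (Rv v) then true else false else false.

Lemma Aset_adm x : admissible n parent (Aset x).
Proof.
  intros v Hv u Hu Hz. pose proof (AC n v u Hv Hu). unfold Aset in *.
  destruct (Rle_dec (Lv v) x); [|discriminate].
  destruct (Rle_dec (Lv u) x); auto. destruct (Rlt_dec x (Rv u)); auto. lra.
Qed.

Lemma gs_convZ : in_convZ n parent gs.
Proof.
  set (B := 0 :: 1 :: flat_map (fun v => [Lv v; Rv v]) (verts n)).
  set (s := RS.sort B).
  assert (Hs : Sorted Rle s) by (apply sorted_conv, RS.Sorted_sort).
  assert (HsB : forall x, In x s <-> In x B).
  { intros; split; apply Permutation_in; [apply Permutation_sym|]; apply RS.Permuted_sort. }
  assert (HB01 : forall x, In x B -> 0 <= x <= 1).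
  { intros x Hx. destruct Hx as [<-|[<-|Hx]]; try lra.
    apply in_flat_map in Hx. destruct Hx as [v [Hv Hx]]. apply verts_In in Hv.
    pose proof (P_pos n nK parent beam rate alpha Htree Halpha Halpha1 _ Hv).
    pose proof (kap_range n nK parent beam rate alpha Halpha Halpha1 _ Hv).
    unfold Lv, Rv in Hx. destruct Hx as [<-|[<-|[]]]; nra. }
  exists (mk Aset s). split; [|split].
  - apply mk_Forall; auto. apply Aset_adm.
  - rewrite mk_w. rewrite (psum_ext s _ (fun x y => (y - x) * Ind 0 1 x)); auto.
    + rewrite psum_I; auto; try lra; apply HsB; simpl; auto.
    + intros x y Hx Hy Hxy. apply HsB, HB01 in Hx. apply HsB, HB01 in Hy. unfold Ind.
      destruct (Rle_dec 0 x); [|lra]. destruct (Rlt_dec x 1); lra.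
  - intros v Hv. rewrite mk_g.
    rewrite (psum_ext s _ (fun x y => (y - x) * Ind (Lv v) (Rv v) x)); auto.
    + rewrite psum_I; auto.
      * unfold Rv, Lv. rewrite gs_eq. ring.
      * apply HsB. right; right. apply in_flat_map. exists v. split; [apply verts_In; auto|simpl; auto].
      * apply HsB. right; right. apply in_flat_map. exists v. split; [apply verts_In; auto|simpl; auto].
      * unfold Rv, Lv. pose proof (P_pos n nK parent beam rate alpha Htree Halpha Halpha1 _ Hv).
        pose proof (kap_range n nK parent beam rate alpha Halpha Halpha1 _ Hv). nra.
    + intros x y _ _ _. unfold Aset, Ind. destruct (Rle_dec (Lv v) x); auto. destruct (Rlt_dec x (Rv v)); auto.
Qed.

End Conv.

Lemma exp_le x y : x <= y -> exp x <= exp y.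
Proof. intros [H|H]; [left; apply exp_increasing; auto|subst; lra]. Qed.

Lemma ln_le y : 0 < y -> ln y <= y - 1 /\ (y <> 1 -> ln y < y - 1).
Proof.
  intros Hy. split.
  - pose proof (exp_ineq1_le (ln y)). rewrite exp_ln in H; auto. lra.
  - intros Hy1. pose proof (exp_ineq1 (ln y) (ln_neq_0 y Hy1 Hy)). rewrite exp_ln in H; auto. lra.
Qed.

Lemma bern a t : a < 1 -> a <> 0 -> 0 < t ->
  Rpower t a / a <= 1 / a + (t - 1) /\ (t <> 1 -> Rpower t a / a < 1 / a + (t - 1)).
Proof.
  intros Ha1 Ha0 Ht. set (E := Rpower t a). set (ia := / a).
  assert (Hia : a * ia = 1) by (unfold ia; field; auto).
  unfold Rdiv. fold ia. rewrite Rmult_1_l.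
  destruct (ln_le t Ht) as [Hl Hls].
  destruct (Rlt_or_le a 0) as [Hneg|Hpos].
  - assert (Hian : ia < 0) by (unfold ia; apply Rinv_lt_0_compat; auto).
    assert (HE : 1 + a * ln t <= E) by (unfold E, Rpower; apply exp_ineq1_le).
    split.
    + nra.
    + intros Ht1. assert (HE' : 1 + a * ln t < E).
      { unfold E, Rpower. apply exp_ineq1. intro h. apply Rmult_integral in h.
        destruct h; [lra|]. apply (ln_neq_0 t Ht1 Ht); auto. }
      pose proof (Hls Ht1). nra.
  - assert (Hp : 0 < a) by lra.
    assert (Hiap : 0 < ia) by (unfold ia; apply Rinv_0_lt_compat; auto).
    set (m := a * t + 1 - a). assert (Hm : 0 < m) by (unfold m; nra).
    assert (Htm : 0 < t / m) by (apply Rdiv_lt_0_compat; auto).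
    assert (H1m : 0 < 1 / m) by (apply Rdiv_lt_0_compat; lra).
    destruct (ln_le (t / m) Htm) as [L1 L1s]. destruct (ln_le (1 / m) H1m) as [L2 _].
    assert (Eq1 : ln (t / m) = ln t - ln m).
    { unfold Rdiv. rewrite ln_mult, ln_Rinv; auto; try lra. all: apply Rinv_0_lt_compat; auto. }
    assert (Eq2 : ln (1 / m) = - ln m).
    { unfold Rdiv. rewrite Rmult_1_l, ln_Rinv; auto. }
    assert (Eq3 : a * (t / m - 1) + (1 - a) * (1 / m - 1) = 0) by (unfold m; field; unfold m in Hm; lra).
    assert (Hkey : a * ln t <= ln m) by nra.
    assert (HEm : E <= m) by (unfold E, Rpower; rewrite <- (exp_ln m) by auto; apply exp_le; lra).
    split.
    + assert (E * ia <= m * ia) by (apply Rmult_le_compat_r; lra).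
      unfold m in H. nra.
    + intros Ht1.
      assert (Htm1 : t / m <> 1).
      { intro h. assert (t = m) by (apply (Rmult_eq_reg_r (/ m)); [unfold Rdiv in h; rewrite h; field; lra | apply Rinv_neq_0_compat; lra]).
        unfold m in H. apply Ht1. assert ((1 - a) * (t - 1) = 0) by lra. apply Rmult_integral in H0. lra. }
      pose proof (L1s Htm1).
      assert (Hkey' : a * ln t < ln m) by nra.
      assert (HEm' : E < m) by (unfold E, Rpower; rewrite <- (exp_ln m) by auto; apply exp_increasing; lra).
      assert (E * ia < m * ia) by (apply Rmult_lt_compat_r; lra).
      unfold m in H0. nra.
Qed.

Lemma tangent alpha xs x y : 0 < alpha -> alpha <> 1 -> 0 < xs -> 0 <= x ->
  f_alpha alpha x = Some y ->
  y <= Rpower xs (1 - alpha) / (1 - alpha) + Rpower xs (1 - alpha - 1) * (x - xs) /\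
  (x <> xs -> y < Rpower xs (1 - alpha) / (1 - alpha) + Rpower xs (1 - alpha - 1) * (x - xs)).
Proof.
  intros Ha Ha1 Hxs Hx Hf. unfold f_alpha in Hf.
  set (a := 1 - alpha) in *.
  assert (Hsplit : Rpower xs a = xs * Rpower xs (a - 1)) by (apply Rpower_split; auto).
  assert (HP : 0 < Rpower xs (a - 1)) by apply Rpower_pos.
  destruct (Rlt_dec 0 x) as [Hx0|Hx0].
  - injection Hf as <-. set (t := x / xs). assert (Ht : 0 < t) by (apply Rdiv_lt_0_compat; auto).
    assert (Hxt : x = xs * t) by (unfold t; field; lra).
    assert (Hpow : Rpower x a = Rpower xs a * Rpower t a) by (rewrite Hxt, Rpower_mult_distr; auto).
    destruct (bern a t ltac:(unfold a; lra) ltac:(unfold a; lra) Ht) as [B1 B2].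
    assert (HA : 0 < Rpower xs a) by apply Rpower_pos.
    assert (Heq : Rpower x a / a = Rpower xs a * (Rpower t a / a)) by (rewrite Hpow; field; unfold a; lra).
    assert (Heq2 : Rpower xs a / a + Rpower xs (a - 1) * (x - xs) = Rpower xs a * (1 / a + (t - 1))).
    { rewrite Hxt, Hsplit. field. unfold a; lra. }
    rewrite Heq, Heq2. split.
    + apply Rmult_le_compat_l; lra.
    + intros Hne. apply Rmult_lt_compat_l; auto. apply B2. intro h. apply Hne. rewrite Hxt, h. ring.
  - assert (x = 0) by lra. subst x. destruct (Rlt_dec alpha 1); [|discriminate].
    injection Hf as <-. assert (Ha0 : 0 < a < 1) by (unfold a; lra).
    rewrite Hsplit.
    assert (Hq : xs * Rpower xs (a - 1) / a + Rpower xs (a - 1) * (0 - xs) = xs * Rpower xs (a - 1) * (1 / a - 1)) by (field; lra).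
    rewrite Hq. assert (1 < 1 / a).
    { unfold Rdiv. rewrite Rmult_1_l. rewrite <- Rinv_1. apply Rinv_lt_contravar; lra. }
    assert (0 < xs * Rpower xs (a - 1)) by (apply Rmult_lt_0_compat; auto).
    split; [nra|intros; nra].
Qed.

Definition oval (o : option R) : R := match o with Some x => x | None => 0 end.

Lemma esum_Some l f s : esum l f = Some s ->
  (forall i, In i l -> f i = Some (oval (f i))) /\ s = sumR l (fun i => oval (f i)).
Proof.
  revert s. induction l as [|a l IH]; simpl; intros s H.
  - injection H as <-. split; [intros; contradiction|auto].
  - destruct (f a) eqn:Ea; [|discriminate]. destruct (esum l f) eqn:El; [|discriminate].
    simpl in H. injection H as <-. destruct (IH r0 eq_refl) as [H1 H2].
    split.
    + intros i [<-|Hi]; [rewrite Ea; auto|auto].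
    + simpl. rewrite H2. auto.
Qed.

Lemma esum_all l f g : (forall i, In i l -> f i = Some (g i)) -> esum l f = Some (sumR l g).
Proof.
  induction l as [|a l IH]; simpl; intros H; auto.
  rewrite H by auto. rewrite IH by auto. reflexivity.
Qed.

Lemma conv_nonneg n parent gamma v : in_convZ n parent gamma -> (v < n)%nat -> 0 <= gamma v.
Proof.
  intros [l [Hf [_ Hg]]] Hv. rewrite Hg by auto. clear Hg.
  induction l as [|p l IH]; simpl; [lra|]. inversion Hf; subst.
  pose proof (IH H2). destruct H1. destruct (snd p v); nra.
Qed.

Section Obj.
Variable n nK : nat.
Variable parent beam : nat -> nat.
Variable rate : nat -> R.
Variable alpha : R.
Hypothesis Htree : is_tree n parent.
Hypothesis Halpha : 0 < alpha.
Hypothesis Halpha1 : alpha <> 1.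
Hypothesis Hrate : forall k, (k < nK)%nat -> 0 < rate k.
Hypothesis Hbeam : forall k, (k < nK)%nat -> (beam k < n)%nat.
Hypothesis Hnonempty : forall v, (v < n)%nat -> exists k, (k < nK)%nat /\ beam k = v.

Local Notation gs := (gamma_star n parent nK beam rate alpha).
Local Notation ds := (delta_star nK beam rate alpha).
Local Notation c := (cc n nK parent beam rate alpha).
Local Notation K := (flows_of nK beam).

Definition ww k := Rpower (rate k) (1 / alpha - 1).
Definition WW v := sumR (K v) ww.

Lemma WW_pos v : (v < n)%nat -> 0 < WW v.
Proof.
  intros Hv. unfold WW. apply sumR_pos.
  - destruct (Hnonempty v Hv) as [k Hk]. intro E. assert (In k (K v)) by (apply flows_In; auto).
    rewrite E in H; auto.
  - intros; apply Rpower_pos.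
Qed.

Lemma ds_eq k : ds k = ww k / WW (beam k).
Proof. reflexivity. Qed.

Lemma ds_pos k : (k < nK)%nat -> 0 < ds k.
Proof. intros. rewrite ds_eq. apply Rdiv_lt_0_compat; [apply Rpower_pos|apply WW_pos; auto]. Qed.

Lemma ds_sum v : (v < n)%nat -> sumR (K v) ds = 1.
Proof.
  intros Hv. rewrite (sumR_ext _ _ (fun k => / WW v * ww k)).
  - rewrite sumR_scal. fold (WW v). field. pose proof (WW_pos v Hv). lra.
  - intros k Hk. apply flows_In in Hk. rewrite ds_eq. destruct Hk as [_ ->]. unfold Rdiv. ring.
Qed.

Lemma ds_Delta : in_Delta n nK beam ds.
Proof.
  split.
  - intros k Hk. pose proof (ds_pos k Hk). split; [lra|]. rewrite ds_eq.
    pose proof (WW_pos (beam k) (Hbeam k Hk)).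
    apply Rmult_le_reg_r with (WW (beam k)); auto. unfold Rdiv. rewrite Rmult_assoc, Rinv_l by lra.
    rewrite Rmult_1_l, Rmult_1_r. unfold WW. apply sumR_In_le.
    + intros; left; apply Rpower_pos.
    + apply flows_In; auto.
  - apply ds_sum.
Qed.

Lemma key k : (k < nK)%nat ->
  Rpower (rate k * gs (beam k) * ds k) (1 - alpha - 1) * rate k = c (beam k).
Proof.
  intros Hk. set (v := beam k). assert (Hv : (v < n)%nat) by (apply Hbeam; auto).
  pose proof (Hrate k Hk) as Hr. pose proof (gs_pos n nK parent beam rate alpha Htree Halpha Halpha1 v Hv) as Hg.
  pose proof (WW_pos v Hv) as HW.
  unfold cc, phi. rewrite ds_eq. fold v. unfold WW, ww.
  set (W := sumR (K v) (fun k => Rpower (rate k) (1 / alpha - 1))) in *.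
  unfold Rpower.
  assert (Hln : ln (rate k * gs v * (exp ((1 / alpha - 1) * ln (rate k)) / W)) =
     ln (rate k) + ln (gs v) + (1 / alpha - 1) * ln (rate k) - ln W).
  { assert (HW' : 0 < W) by exact HW.
    set (E1 := exp ((1 / alpha - 1) * ln (rate k))). assert (HE1 : 0 < E1) by apply exp_pos.
    assert (HiW : 0 < / W) by (apply Rinv_0_lt_compat; auto).
    unfold Rdiv. rewrite (ln_mult (rate k * gs v) (E1 * / W)) by (apply Rmult_lt_0_compat; auto).
    rewrite (ln_mult (rate k) (gs v)) by auto. rewrite (ln_mult E1 (/ W)) by auto.
    rewrite ln_Rinv by auto. unfold E1. rewrite ln_exp. unfold Rdiv. ring. }
  rewrite Hln.
  assert (E : exp ((1 - alpha - 1) * (ln (rate k) + ln (gs v) + (1 / alpha - 1) * ln (rate k) - ln W)) * exp (ln (rate k))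
     = exp (alpha * ln W) * exp ((1 - alpha - 1) * ln (gs v))).
  { rewrite <- !exp_plus. f_equal. field. lra. }
  rewrite exp_ln in E by auto. exact E.
Qed.

Definition obj := objective n nK beam rate alpha.
Definition hs v k := Rpower (rate k * gs v * ds k) (1 - alpha) / (1 - alpha).

Lemma obj_star : obj ds gs = Some (sumR (verts n) (fun v => sumR (K v) (hs v))).
Proof.
  unfold obj, objective. apply esum_all. intros v Hv. apply verts_In in Hv. apply esum_all.
  intros k Hk. apply flows_In in Hk. destruct Hk as [Hk Hbk].
  unfold f_alpha. destruct (Rlt_dec 0 (rate k * gs v * ds k)) as [h|h]; [reflexivity|].
  exfalso. apply h. pose proof (Hrate k Hk). pose proof (ds_pos k Hk).
  pose proof (gs_pos n nK parent beam rate alpha Htree Halpha Halpha1 v Hv).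
  apply Rmult_lt_0_compat; auto. apply Rmult_lt_0_compat; auto.
Qed.

Lemma main_bound delta gamma s :
  feasible n nK parent beam delta gamma -> obj delta gamma = Some s ->
  s <= sumR (verts n) (fun v => sumR (K v) (hs v)) /\
  (sumR (verts n) (fun v => sumR (K v) (hs v)) <= s ->
     (forall k, (k < nK)%nat -> delta k = ds k) /\ (forall v, (v < n)%nat -> gamma v = gs v)).
Proof.
  intros [Hconv [Hd01 Hdsum]] Hobj.
  set (ss := sumR (verts n) (fun v => sumR (K v) (hs v))).
  unfold obj, objective in Hobj.
  destruct (esum_Some _ _ _ Hobj) as [Hout Hs].
  set (y := fun v k => oval (f_alpha alpha (rate k * gamma v * delta k))).
  assert (Hin : forall v, In v (verts n) -> forall k, In k (K v) ->
            f_alpha alpha (rate k * gamma v * delta k) = Some (y v k)).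
  { intros v Hv k Hk. pose proof (Hout v Hv).
    destruct (esum_Some _ _ _ H) as [H1 _]. apply H1; auto. }
  assert (Hs' : s = sumR (verts n) (fun v => sumR (K v) (y v))).
  { rewrite Hs. apply sumR_ext. intros v Hv. pose proof (Hout v Hv).
    destruct (esum_Some _ _ _ H) as [_ H2]. exact H2. }
  set (xs := fun v k => rate k * gs v * ds k).
  set (x := fun v k => rate k * gamma v * delta k).
  set (D := fun v k => hs v k + Rpower (xs v k) (1 - alpha - 1) * (x v k - xs v k) - y v k).
  assert (Hfacts : forall v, In v (verts n) -> forall k, In k (K v) ->
      0 <= D v k /\ (x v k <> xs v k -> 0 < D v k)).
  { intros v Hv k Hk. pose proof (Hin v Hv k Hk) as Hf.
    apply verts_In in Hv. apply flows_In in Hk. destruct Hk as [Hk Hbk].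
    assert (Hxs : 0 < xs v k).
    { unfold xs. pose proof (Hrate k Hk). pose proof (ds_pos k Hk).
      pose proof (gs_pos n nK parent beam rate alpha Htree Halpha Halpha1 v Hv).
      apply Rmult_lt_0_compat; auto. apply Rmult_lt_0_compat; auto. }
    assert (Hx : 0 <= x v k).
    { unfold x. pose proof (Hrate k Hk). pose proof (Hd01 k Hk).
      pose proof (conv_nonneg n parent gamma v Hconv Hv). apply Rmult_le_pos; [|lra]. apply Rmult_le_pos; lra. }
    destruct (tangent alpha (xs v k) (x v k) (y v k) Halpha Halpha1 Hxs Hx Hf) as [T1 T2].
    unfold D, hs. fold (xs v k). split; [lra|intros; pose proof (T2 H); lra]. }
  assert (Hinner : forall v, In v (verts n) ->
     sumR (K v) (D v) = sumR (K v) (hs v) + c v * (gamma v - gs v) - sumR (K v) (y v)).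
  { intros v Hv. apply verts_In in Hv. unfold D.
    rewrite (sumR_minus _ (fun k => hs v k + Rpower (xs v k) (1 - alpha - 1) * (x v k - xs v k)) (y v)).
    rewrite sumR_plus. f_equal. f_equal.
    rewrite (sumR_ext _ _ (fun k => c v * gamma v * delta k - c v * gs v * ds k)).
    - rewrite sumR_minus, !sumR_scal. rewrite Hdsum, ds_sum by auto. ring.
    - intros k Hk. apply flows_In in Hk. destruct Hk as [Hk Hbk].
      pose proof (key k Hk) as Hkey. rewrite Hbk in Hkey. unfold xs, x.
      rewrite <- Hkey. ring. }
  assert (HsumD : sumR (verts n) (fun v => sumR (K v) (D v)) <= ss - s).
  { rewrite (sumR_ext _ _ _ Hinner). rewrite sumR_minus, sumR_plus.
    rewrite (sumR_ext _ (fun v => c v * (gamma v - gs v)) (fun v => c v * gamma v - c v * gs v))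
      by (intros; ring).
    rewrite sumR_minus.
    rewrite (S1 n nK parent beam rate alpha Htree Halpha Halpha1).
    pose proof (S3 n nK parent beam rate alpha Htree Halpha Halpha1 gamma Hconv).
    rewrite Hs'. unfold ss. lra. }
  assert (Hnn : forall v, In v (verts n) -> 0 <= sumR (K v) (D v)).
  { intros v Hv. apply sumR_nonneg. intros k Hk. apply (Hfacts v Hv k Hk). }
  pose proof (sumR_nonneg _ _ Hnn).
  split; [lra|].
  intros Hge.
  assert (Hz : forall v, In v (verts n) -> forall k, In k (K v) -> x v k = xs v k).
  { intros v Hv k Hk.
    assert (Hv0 : sumR (K v) (D v) = 0) by (apply (sumR_zero_nonneg (verts n) (fun v => sumR (K v) (D v))); auto; lra).
    assert (Hk0 : D v k = 0).
    { apply (sumR_zero_nonneg (K v) (D v)); auto. intros; apply (Hfacts v Hv); auto. lra. }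
    destruct (Req_dec (x v k) (xs v k)); auto. pose proof (proj2 (Hfacts v Hv k Hk) H0). lra. }
  assert (Hg : forall v, (v < n)%nat -> gamma v = gs v).
  { intros v Hv.
    transitivity (sumR (K v) (fun k => gamma v * delta k)).
    { rewrite sumR_scal, Hdsum by auto. ring. }
    transitivity (sumR (K v) (fun k => gs v * ds k)).
    2:{ rewrite sumR_scal, ds_sum by auto. ring. }
    apply sumR_ext. intros k Hk. pose proof (Hz v (proj2 (verts_In v n) Hv) k Hk).
    apply flows_In in Hk. pose proof (Hrate k (proj1 Hk)). unfold x, xs in H0.
    apply Rmult_eq_reg_l with (rate k); [|lra]. rewrite <- !Rmult_assoc. auto. }
  split; auto.
  intros k Hk. pose proof (Hbeam k Hk) as Hv.
  assert (Hkin : In k (K (beam k))) by (apply flows_In; auto).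
  pose proof (Hz _ (proj2 (verts_In _ n) Hv) k Hkin). unfold x, xs in H0.
  rewrite (Hg _ Hv) in H0. pose proof (Hrate k Hk).
  pose proof (gs_pos n nK parent beam rate alpha Htree Halpha Halpha1 _ Hv).
  apply Rmult_eq_reg_l with (rate k * gs (beam k)); [auto|].
  apply Rmult_integral_contrapositive; split; lra.
Qed.

Lemma final :
  optimal n nK parent beam rate alpha ds gs /\
  forall delta gamma, optimal n nK parent beam rate alpha delta gamma ->
    (forall k, (k < nK)%nat -> delta k = ds k) /\
    (forall v, (v < n)%nat -> gamma v = gs v).
Proof.
  assert (Hfeas : feasible n nK parent beam ds gs).
  { split; [apply (gs_convZ n nK parent beam rate alpha Htree Halpha Halpha1)|apply ds_Delta]. }
  pose proof obj_star as Hstar. unfold obj in Hstar.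
  split.
  - split; auto. intros d' g' Hf'. rewrite Hstar.
    destruct (objective n nK beam rate alpha d' g') eqn:E; simpl; auto.
    apply (main_bound d' g' r Hf' E).
  - intros delta gamma [Hf Hopt]. pose proof (Hopt ds gs Hfeas) as Hle.
    rewrite Hstar in Hle. destruct (objective n nK beam rate alpha delta gamma) eqn:E; simpl in Hle; [|contradiction].
    apply (main_bound delta gamma r Hf E). auto.
Qed.

End Obj.

Theorem theorem1 (n nK : nat) (parent beam : nat -> nat) (rate : nat -> R) (alpha : R)
  (Htree : is_tree n parent)
  (Halpha : 0 < alpha) (Halpha1 : alpha <> 1)
  (Hrate : forall k, (k < nK)%nat -> 0 < rate k)
  (Hbeam : forall k, (k < nK)%nat -> (beam k < n)%nat)
  (Hnonempty : forall v, (v < n)%nat -> exists k, (k < nK)%nat /\ beam k = v) :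
  optimal n nK parent beam rate alpha
    (delta_star nK beam rate alpha) (gamma_star n parent nK beam rate alpha) /\
  forall delta gamma, optimal n nK parent beam rate alpha delta gamma ->
    (forall k, (k < nK)%nat -> delta k = delta_star nK beam rate alpha k) /\
    (forall v, (v < n)%nat -> gamma v = gamma_star n parent nK beam rate alpha v).
Proof.
  exact (final n nK parent beam rate alpha Htree Halpha Halpha1 Hrate Hbeam Hnonempty).
Qed.
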